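(* Let $P$ be a finite set of points in $\mathbb{R}^m$, let $(A,B)$ be an optimal 2-means partition of $P$, let $S\subseteq A$ be the set of low-revenue points of $A$, assume $S\neq\emptyset$, and let $x\in\arg\max_{u\in S}d(u,\rho(A))$. Then $d(\rho(S),\rho(A))\ge\frac79 d(x,\rho(A))$.
   Context: Distances are Euclidean: $d(x,y)=\|x-y\|_2$. For finite nonempty $S$, $\rho(S)=\frac{1}{|S|}\sum_{u\in S}u$ and $\Delta_1(S)=\sum_{u\in S}d(u,\rho(S))^2$. A partition $(A,B)$ of $P$ into two nonempty sets is an optimal 2-means partition if it minimizes $\Delta_1(A)+\Delta_1(B)$ among all partitions of $P$ into two nonempty sets. For $i\in A$, $j\in B$, $rev(i,j)=\min\{d(i,j)/\max\{d(i,\rho(A)),d(j,\rho(B))\},\,1\}$ (equal to $1$ if the maximum is $0$). For $u\in A$, $HR_B(u)=\{v\in B: rev(u,v)\ge\frac{1}{10}\}$. A point $u\in A$ is a high-revenue point if $|HR_B(u)|\ge\frac12|B|$, and a low-revenue point otherwise. *)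

(* Defs.v *)
From HB Require Import structures.
From mathcomp Require Import all_boot all_order all_algebra.
From mathcomp Require Import finmap.
From mathcomp Require Import reals.
Set Implicit Arguments. Unset Strict Implicit. Unset Printing Implicit Defensive.
Import Order.TTheory GRing.Theory Num.Theory.
Local Open Scope fset_scope.
Local Open Scope ring_scope.

Section KMeans.
Variables (R : realType) (m : nat).
Notation pt := 'rV[R]_m.

Definition dist (x y : pt) : R :=
  Num.sqrt (\sum_(i < m) (x ord0 i - y ord0 i) ^+ 2).

Definition centroid (S : {fset pt}) : pt :=
  (#|` S|%:R)^-1 *: \sum_(u <- S) u.

Definition Delta1 (S : {fset pt}) : R :=
  \sum_(u <- S) dist u (centroid S) ^+ 2.

Definition two_partition (P A B : {fset pt}) : Prop :=
  [/\ A `|` B = P, A `&` B = fset0, A != fset0 & B != fset0].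

Definition optimal_2means (P A B : {fset pt}) : Prop :=
  two_partition P A B /\
  forall A' B' : {fset pt}, two_partition P A' B' ->
    Delta1 A + Delta1 B <= Delta1 A' + Delta1 B'.

Definition rev (A B : {fset pt}) (i j : pt) : R :=
  let M := Num.max (dist i (centroid A)) (dist j (centroid B)) in
  if M == 0 then 1 else Num.min (dist i j / M) 1.

Definition HR (A B : {fset pt}) (u : pt) : {fset pt} :=
  [fset v in B | (10%:R)^-1 <= rev A B u v].

Definition high_revenue (A B : {fset pt}) (u : pt) : bool :=
  (#|` B|%:R / 2%:R <= (#|` HR A B u|%:R : R)).

Definition low_revenue_set (A B : {fset pt}) : {fset pt} :=
  [fset u in A | ~~ high_revenue A B u].

End KMeans.

(* Main.v *)
Require Import Defs.
From HB Require Import structures.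
From mathcomp Require Import all_boot all_order all_algebra.
From mathcomp Require Import finmap.
From mathcomp Require Import reals.
From mathcomp Require Import ring lra zify.
Import Order.TTheory GRing.Theory Num.Theory.
Local Open Scope fset_scope.
Local Open Scope ring_scope.

Section H.
Variables (R : realType) (m : nat).
Notation pt := 'rV[R]_m.

Definition nrm (y : pt) : R := Num.sqrt (\sum_(i < m) (y ord0 i) ^+ 2).

Lemma sumsq_ge0 (f : 'I_m -> R) : 0 <= \sum_i f i ^+ 2.
Proof. by apply: sumr_ge0 => i _; rewrite sqr_ge0. Qed.

Lemma distE (x y : pt) : dist x y = nrm (x - y).
Proof. by rewrite /dist /nrm; congr Num.sqrt; apply: eq_bigr => i _; rewrite !mxE. Qed.

Lemma nrm_ge0 y : 0 <= nrm y.
Proof. exact: sqrtr_ge0. Qed.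

Lemma nrm_sq y : nrm y ^+ 2 = \sum_i (y ord0 i) ^+ 2.
Proof. by rewrite sqr_sqrtr // sumsq_ge0. Qed.

Lemma nrmN y : nrm (- y) = nrm y.
Proof. by rewrite /nrm; congr Num.sqrt; apply: eq_bigr => i _; rewrite mxE sqrrN. Qed.

Lemma nrmZ c y : nrm (c *: y) = `|c| * nrm y.
Proof.
rewrite /nrm -sqrtr_sqr -sqrtrM ?sqr_ge0 //; congr Num.sqrt.
by rewrite mulr_sumr; apply: eq_bigr => i _; rewrite mxE exprMn.
Qed.

Lemma cs (a b : 'I_m -> R) :
  \sum_i a i * b i <= Num.sqrt (\sum_i a i ^+ 2) * Num.sqrt (\sum_i b i ^+ 2).
Proof.
set al := \sum_i a i ^+ 2; set be := \sum_i b i ^+ 2.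
have key : forall t, 0 < t -> 2 * \sum_i a i * b i <= t * al + t^-1 * be.
  move=> t t0; rewrite mulr_sumr /al /be !mulr_sumr -big_split /=.
  apply: ler_sum => i _.
  have : 0 <= (t * a i - b i) ^+ 2 / t by apply: divr_ge0; rewrite ?sqr_ge0 ?ltW.
  have tn : t != 0 by rewrite gt_eqF.
  rewrite -subr_ge0; set q := (X in 0 <= X -> _).
  have -> : q = t * a i ^+ 2 + t^-1 * b i ^+ 2 - 2 * (a i * b i).
    by rewrite /q; field.
  by [].
have al0 : 0 <= al by exact: sumsq_ge0.
have be0 : 0 <= be by exact: sumsq_ge0.
case: (ltrgt0P al) => [alp||]; last first.
- move=> al00.
  have az : forall i, a i = 0.
    move=> i; apply/eqP; rewrite -sqrf_eq0; apply/eqP.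
    move: al00; rewrite /al => /eqP; rewrite psumr_eq0 => [/allP H|j _]; last by rewrite sqr_ge0.
    by apply/eqP; apply: H; rewrite mem_index_enum.
  rewrite big1 ?mulr_ge0 ?sqrtr_ge0 // => i _; by rewrite az mul0r.
- by move=> h; exfalso; move: al0; rewrite leNgt h.
case: (ltrgt0P be) => [bep||]; last first.
- move=> be00.
  have bz : forall i, b i = 0.
    move=> i; apply/eqP; rewrite -sqrf_eq0; apply/eqP.
    move: be00; rewrite /be => /eqP; rewrite psumr_eq0 => [/allP H|j _]; last by rewrite sqr_ge0.
    by apply/eqP; apply: H; rewrite mem_index_enum.
  rewrite big1 ?mulr_ge0 ?sqrtr_ge0 // => i _; by rewrite bz mulr0.
- by move=> h; exfalso; move: be0; rewrite leNgt h.
have sa : 0 < Num.sqrt al by rewrite sqrtr_gt0.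
have sb : 0 < Num.sqrt be by rewrite sqrtr_gt0.
have := key (Num.sqrt be / Num.sqrt al) (divr_gt0 sb sa).
have aux : forall p q x y : R, 0 < p -> 0 < q -> x = p ^+ 2 -> y = q ^+ 2 ->
   q / p * x + (q / p)^-1 * y = 2 * (p * q).
  by move=> p q x y p0 q0 -> ->; field; rewrite !gt_eqF.
rewrite (aux _ _ _ _ sa sb) ?sqr_sqrtr //.
rewrite ler_pM2l //.
Qed.

Lemma nrmD y z : nrm (y + z) <= nrm y + nrm z.
Proof.
rewrite -(ler_pXn2r (_ : 0 < 2)%N) ?nnegrE ?addr_ge0 ?nrm_ge0 //.
rewrite nrm_sq sqrrD !nrm_sq.
have -> : \sum_i (y + z) ord0 i ^+ 2 = \sum_i y ord0 i ^+ 2 + \sum_i z ord0 i ^+ 2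
   + 2 * \sum_i (y ord0 i * z ord0 i).
  rewrite mulr_sumr -!big_split /=; apply: eq_bigr => i _; rewrite mxE; ring.
have h := cs (fun i => y ord0 i) (fun i => z ord0 i); rewrite /nrm -mulr_natl; simpl in h; lra.

Qed.

Lemma nrm0 : nrm 0 = 0.
Proof. by rewrite /nrm big1 ?sqrtr0 // => i _; rewrite mxE expr0n. Qed.

Lemma nrm_sum (I : Type) (s : seq I) (f : I -> pt) :
  nrm (\sum_(x <- s) f x) <= \sum_(x <- s) nrm (f x).
Proof.
elim: s => [|a s IH]; first by rewrite !big_nil nrm0.
rewrite !big_cons; apply: le_trans (nrmD _ _) _; by rewrite lerD2l.
Qed.

Lemma dist_sym (x y : pt) : dist x y = dist y x.
Proof. by rewrite !distE -nrmN opprB. Qed.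

Lemma dist_tri (x y z : pt) : dist x z <= dist x y + dist y z.
Proof.
rewrite !distE; have -> : x - z = (x - y) + (y - z) by rewrite addrA subrK.
exact: nrmD.
Qed.

Lemma dist_ge0 (x y : pt) : 0 <= dist x y.
Proof. exact: sqrtr_ge0. Qed.

Lemma dist_sq (x y : pt) : dist x y ^+ 2 = \sum_i (x ord0 i - y ord0 i) ^+ 2.
Proof. by rewrite sqr_sqrtr // sumsq_ge0. Qed.

Lemma expand (I : Type) (s : seq I) (f : I -> R) c :
  \sum_(x <- s) (f x - c) ^+ 2 =
  \sum_(x <- s) f x ^+ 2 - 2 * c * \sum_(x <- s) f x + (size s)%:R * c ^+ 2.
Proof.
elim: s => [|a s IH]; first by rewrite !big_nil mul0r; ring.
rewrite !big_cons IH /= -addn1 natrD; ring.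
Qed.

Lemma var_min (I : Type) (s : seq I) (f : I -> R) c : (0 < size s)%N ->
  \sum_(x <- s) (f x - ((size s)%:R)^-1 * \sum_(y <- s) f y) ^+ 2
   <= \sum_(x <- s) (f x - c) ^+ 2.
Proof.
move=> hs; rewrite !expand.
set n := (size s)%:R; set T := \sum_(y <- s) f y.
have n0 : 0 < n by rewrite ltr0n.
rewrite -subr_ge0.
have -> : \sum_(x <- s) f x ^+ 2 - 2 * c * T + n * c ^+ 2 -
  (\sum_(x <- s) f x ^+ 2 - 2 * (n^-1 * T) * T + n * (n^-1 * T) ^+ 2)
  = (n * c - T) ^+ 2 / n by field; rewrite gt_eqF.
by apply: divr_ge0; rewrite ?sqr_ge0 ?ltW.
Qed.

Lemma centroid_coord (S : {fset pt}) i :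
  centroid S ord0 i = (#|` S|%:R)^-1 * \sum_(u <- S) u ord0 i.
Proof. by rewrite /centroid mxE summxE. Qed.

Lemma delta_le (S : {fset pt}) c : S != fset0 ->
  Delta1 S <= \sum_(u <- S) dist u c ^+ 2.
Proof.
rewrite -cardfs_gt0 => hS; rewrite /Delta1.
under eq_bigr do rewrite dist_sq.
under [X in _ <= X]eq_bigr do rewrite dist_sq.
rewrite exchange_big [X in _ <= X]exchange_big /=.
apply: ler_sum => i _; rewrite centroid_coord.
exact: (@var_min pt _ (fun u : pt => u ord0 i) (c ord0 i) hS).
Qed.


Lemma opt_closer (P A B : {fset pt}) v : optimal_2means P A B -> v \in B ->
  dist v (centroid B) <= dist v (centroid A).
Proof.
case=> [[hU hI hA hB] hopt] vB.
have vA : v \notin A.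
  apply/negP => vA; move/fsetP: hI => /(_ v); rewrite !inE vA vB //.
case: (B `\ v =P fset0) => [B1 | B1].
  have eB : B = [fset v] by rewrite -(fsetD1K vB) B1 fsetU0.
  have -> : centroid B = v.
    by rewrite /centroid eB big_seq_fset1 cardfs1 invr1 scale1r.
  rewrite distE subrr nrm0; exact: dist_ge0.
have hp : two_partition P (v |` A) (B `\ v).
  split.
  - rewrite -hU; apply/fsetP => w; rewrite !inE.
    by case: eqVneq => [->|] /=; rewrite ?vB ?orbT.
  - apply/fsetP => w; rewrite !inE.
    case: eqVneq => [->|] //=.
    by move/fsetP: hI => /(_ w); rewrite !inE.
  - by apply/fset0Pn; exists v; rewrite !inE eqxx.
  - by apply/eqP.
have h := hopt _ _ hp.
have h1 : Delta1 (v |` A) <= dist v (centroid A) ^+ 2 + Delta1 A.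
  apply: le_trans (@delta_le (v |` A) (centroid A) _) _.
    by apply/fset0Pn; exists v; rewrite !inE eqxx.
  by rewrite big_fsetU1.
have h2 : dist v (centroid B) ^+ 2 + Delta1 (B `\ v) <= Delta1 B.
  rewrite [Delta1 B]/Delta1 (big_fsetD1 _ vB) lerD2l.
  by apply: delta_le; apply/eqP.
have hsq : dist v (centroid B) ^+ 2 <= dist v (centroid A) ^+ 2 by lra.
move: hsq; rewrite ler_pXn2r ?nnegrE ?dist_ge0 //.
Qed.


Lemma low_close (P A B : {fset pt}) u v : optimal_2means P A B -> v \in B ->
  ~~ ((10%:R)^-1 <= Defs.rev A B u v) -> 9 * dist u v < dist u (centroid A).
Proof.
move=> hopt vB; rewrite /Defs.rev.
have hc := opt_closer _ _ _ _ hopt vB.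
have ht : dist v (centroid A) <= dist u v + dist u (centroid A).
  by rewrite (dist_sym u v); apply: dist_tri.
have g1 := dist_ge0 u (centroid A); have g2 := dist_ge0 v (centroid B).
have g3 := dist_ge0 u v.
set du := dist u (centroid A) in ht g1 *; set dv := dist v (centroid B) in hc g2 *.
set duv := dist u v in ht g3 *.
case: eqP => [_|M0].
  by move=> /negP[]; rewrite invf_le1 ?ler1n // ltr0n.
rewrite -ltNge => hmin; move: hmin; rewrite gt_min.
have h10 : ~~ (1 < (10%:R : R)^-1).
  by rewrite -leNgt invf_le1 ?ler1n // ltr0n.
rewrite (negbTE h10) orbF.
have Mp : 0 < Num.max du dv.
  rewrite lt_neqAle eq_sym le_max g1 andbT; by apply/eqP.
rewrite ltr_pdivrMr // => h.
move: Mp h; rewrite maxEle; case: (leP du dv) => hle Mp h; lra.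
Qed.


Lemma sum_le_const (I : eqType) (s : seq I) (f : I -> R) c :
  (forall x, x \in s -> f x <= c) -> \sum_(x <- s) f x <= (size s)%:R * c.
Proof.
elim: s => [|a s IH] h; first by rewrite big_nil mul0r.
rewrite big_cons /= -addn1 natrD mulrDl mul1r addrC lerD //.
  by apply: IH => y ys; apply: h; rewrite inE ys orbT.
by apply: h; rewrite inE eqxx.
Qed.

Lemma centroid_diff (S : {fset pt}) x : S != fset0 ->
  x - centroid S = (#|` S|%:R)^-1 *: \sum_(u <- S) (x - u).
Proof.
rewrite -cardfs_gt0 => hS.
have n0 : (#|` S|%:R : R) != 0 by rewrite pnatr_eq0 -lt0n.
rewrite sumrB /centroid scalerBr; congr (_ - _).
have -> : \sum_(u <- S) x = x *+ #|` S|.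
  elim: (enum_fset S) => [|a s IH]; first by rewrite big_nil.
  by rewrite big_cons IH /= mulrS.
by rewrite -scaler_nat scalerA mulVf // scale1r.
Qed.


Lemma low_big (A B : {fset pt}) u : u \in low_revenue_set A B ->
  u \in A /\ (#|` B| < 2 * #|` B `\` HR A B u|)%N.
Proof.
rewrite !inE /= => /andP[uA hh]; split => //.
move: hh; rewrite /high_revenue -ltNge ltr_pdivlMr ?ltr0n // -natrM ltr_nat => hh.
rewrite cardfsDS; last first.
  by apply/fsubsetP => w; rewrite !inE /= => /andP[].
have : (#|` HR A B u| <= #|` B|)%N.
  by apply: fsubset_leq_card; apply/fsubsetP => w; rewrite !inE /= => /andP[].
move: hh; set b := #|` B|; set c := #|` HR A B u|; lia.
Qed.


End H.
Arguments low_big {R m A B u}.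
Arguments low_close {R m P A B u v}.
Arguments dist_tri {R m}.
Arguments dist_sym {R m}.
Arguments centroid_diff {R m S}.
Arguments nrm_sum {R m I}.
Arguments sum_le_const {R I s f c}.
Arguments nrmZ {R m}.
Arguments distE {R m}.


Theorem mainTheorem6 (R : realType) (m : nat) (P A B : {fset 'rV[R]_m})
    (x : 'rV[R]_m) :
  optimal_2means P A B ->
  low_revenue_set A B != fset0 ->
  x \in low_revenue_set A B ->
  (forall u, u \in low_revenue_set A B ->
     dist u (centroid A) <= dist x (centroid A)) ->
  (7%:R / 9%:R) * dist x (centroid A)
    <= dist (centroid (low_revenue_set A B)) (centroid A).
Proof.
move=> hopt hS xS hmax.
set S := low_revenue_set A B in hS xS hmax *.
set D := dist x (centroid A) in hmax *.
have close : forall u, u \in S -> 9 * dist x u <= 2 * D.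
  move=> u uS.
  have [uA hu] := low_big uS; have [xA hx] := low_big xS.
  set Cu := B `\` HR A B u in hu; set Cx := B `\` HR A B x in hx.
  have : (0 < #|` Cu `&` Cx|)%N.
    have hU := cardfsUI Cu Cx.
    have : (#|` Cu `|` Cx| <= #|` B|)%N.
      apply: fsubset_leq_card; rewrite fsubUset; apply/andP; split;
        by apply/fsubsetP => w; rewrite in_fsetD => /andP[].
    move: hU hu hx.
    set a := #|` Cu `|` Cx|; set b := #|` Cu `&` Cx|; set cu := #|` Cu|;
    set cx := #|` Cx|; set nb := #|` B|; lia.
  rewrite cardfs_gt0 => /fset0Pn [v]; rewrite in_fsetI !in_fsetD.
  case/andP => /andP[hvu vB] /andP[hvx _].
  have hvu' : ~~ ((10%:R)^-1 <= Defs.rev A B u v).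
    by move: hvu; rewrite !inE /= vB.
  have hvx' : ~~ ((10%:R)^-1 <= Defs.rev A B x v).
    by move: hvx; rewrite !inE /= vB.
  have h1 := low_close hopt vB hvu'.
  have h2 := low_close hopt vB hvx'.
  have h3 := hmax _ uS.
  have h4 := dist_tri x v u.
  rewrite (dist_sym v u) in h4.
  rewrite -/D in h2.
  lra.
have hd : dist x (centroid S) <= 2 / 9 * D.
  rewrite distE centroid_diff; last by apply/fset0Pn; exists x.
  have n0 : (0 < #|` S|)%N by rewrite cardfs_gt0; apply/fset0Pn; exists x.
  have n0' : (0 : R) < #|` S|%:R by rewrite ltr0n.
  rewrite nrmZ ger0_norm ?invr_ge0 ?ler0n //.
  have hsum : nrm R m (\sum_(u <- S) (x - u)) <= #|` S|%:R * (2 / 9 * D).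
    apply: le_trans (nrm_sum _ _) _.
    apply: sum_le_const => u uS; rewrite -distE.
    have := close u uS; lra.
  rewrite -(ler_pM2l n0') mulrA mulfV ?gt_eqF // mul1r.
  exact: hsum.
have := dist_tri x (centroid S) (centroid A).
rewrite -/D dist_sym => h.
have : dist x (centroid S) = dist (centroid S) x by rewrite dist_sym.
move=> e; rewrite -e in h.
lra.
Qed.
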